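(* For every $d \in \{2,3,4,5,7,8,9,12,16,24,56,72\}$, the sequence $\left(\left\lfloor n^6/d \right\rfloor\right)_{n \ge 1}$ is eventually prime-free.
   Context: A sequence $(a_n)_{n\ge 1}$ of positive integers is called eventually prime-free if there exists an index $n_0$ such that $a_n$ is composite for all $n \ge n_0$. (Here, as in the paper, this is understood as: only finitely many terms $a_n$ are prime.) *)

(* Defs.v *)
From mathcomp Require Import all_boot.

Definition eventually_prime_free (a : nat -> nat) : Prop :=
  exists n0 : nat, forall n : nat, n0 <= n -> ~~ prime (a n).

(* Main.v *)
Require Import Defs.
From mathcomp Require Import all_boot.
From mathcomp Require Import zify.

Lemma np_prod m d A B : m * d = A * B -> d < A -> d < B -> ~~ prime m.
Proof.
move=> E hA hB; apply/negP => pm.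
have m0 : 0 < m by apply: prime_gt0.
have : m %| A * B by rewrite -E dvdn_mulr.
rewrite Euclid_dvdM // => /orP [/dvdnP [k hk] | /dvdnP [k hk]].
- subst A. have : d = k * B.
    apply/eqP; rewrite -(eqn_pmul2l m0) E; apply/eqP; nia.
  move=> ed; rewrite ed in hA hB; clear E; case: k hA hB ed => [|k] //; nia.
- subst B. have : d = A * k.
    apply/eqP; rewrite -(eqn_pmul2l m0) E; apply/eqP; nia.
  move=> ed; rewrite ed in hA hB; clear E; case: k hA hB ed => [|k]; rewrite ?muln0 //; nia.
Qed.

Lemma sq_case n d s : n ^ 6 %% d = s * s -> 9 <= n -> d <= 72 -> s <= 8 ->
  ~~ prime (n ^ 6 %/ d).
Proof.
move=> hr hn hd hs.
have E := divn_eq (n ^ 6) d. rewrite hr in E.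
have h3 : 729 <= n ^ 3.
  have : 9 ^ 3 <= n ^ 3 by rewrite leq_exp2r.
  by [].
have e6 : n ^ 6 = n ^ 3 * n ^ 3 by rewrite -expnD.
apply: (@np_prod _ d (n ^ 3 - s) (n ^ 3 + s)); try lia.
Qed.

Lemma cube_case n d : n ^ 6 %% d = 8 -> 9 <= n -> d <= 72 ->
  ~~ prime (n ^ 6 %/ d).
Proof.
move=> hr hn hd.
have E := divn_eq (n ^ 6) d. rewrite hr in E.
have e6 : n ^ 6 = n ^ 2 * n ^ 2 * n ^ 2 by rewrite -!expnD.
set y := n ^ 2 in e6.
have hy : 81 <= y by rewrite /y; nia.
apply: (@np_prod _ d (y - 2) (y * y + 2 * y + 4)); try nia.
Qed.

Definition f6 (d k : nat) := ((((k * k %% d) * k %% d) * k %% d) * k %% d) * k %% d.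

Lemma f6E d n : n ^ 6 %% d = f6 d (n %% d).
Proof.
rewrite -modnXm; move: (n %% d) => m.
rewrite /f6; do ! (rewrite modnMml || rewrite -mulnA).
by rewrite !expnS expn0 muln1.
Qed.

Lemma res_ok d : d \in [:: 2; 3; 4; 5; 7; 8; 9; 12; 16; 24; 56; 72] ->
  all (fun k => f6 d k \in [:: 0; 1; 4; 9; 16; 49; 64; 8]) (iota 0 d).
Proof.
rewrite !inE => hd.
repeat (case/orP: hd => [/eqP -> | hd]; first by vm_compute).
by move/eqP: hd => ->; vm_compute.
Qed.

Theorem theorem4 (d : nat) :
  d \in [:: 2; 3; 4; 5; 7; 8; 9; 12; 16; 24; 56; 72] ->
  eventually_prime_free (fun n => n ^ 6 %/ d).
Proof.
move=> hd; exists 9 => n hn.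
have /andP [d0 hd72] : 0 < d <= 72.
  have /allP H : all (fun x => 0 < x <= 72) [:: 2; 3; 4; 5; 7; 8; 9; 12; 16; 24; 56; 72] by [].
  exact: H.
have hk : n %% d \in iota 0 d by rewrite mem_iota add0n ltn_pmod.
have := allP (res_ok d hd) _ hk; rewrite /= -f6E !inE.
case/orP => [/eqP h|]; first by apply: (@sq_case _ _ 0).
case/orP => [/eqP h|]; first by apply: (@sq_case _ _ 1).
case/orP => [/eqP h|]; first by apply: (@sq_case _ _ 2).
case/orP => [/eqP h|]; first by apply: (@sq_case _ _ 3).
case/orP => [/eqP h|]; first by apply: (@sq_case _ _ 4).
case/orP => [/eqP h|]; first by apply: (@sq_case _ _ 7).
case/orP => [/eqP h|]; first by apply: (@sq_case _ _ 8).
by move/eqP => h; apply: cube_case.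
Qed.
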